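(* Let $\mathscr{V}\subseteq\mathfrak{B}(\mathcal{H})$ be a linear subspace with ${\rm supp}(\mathscr{V})=\mathcal{H}$, let $\rho$ be a positive definite operator with $\rho\sim{\rm alg}(\mathcal{D}_\rho^{-1}(\mathscr{V}))$, and let $\sigma$ be another positive definite operator. If $\mathcal{D}_\rho^{-1}(\sigma)\in{\rm alg}(\mathcal{D}_\rho^{-1}(\mathscr{V}))$, then $${\rm alg}\big(\mathcal{D}_\sigma^{-1}(\mathscr{V})\big)\subseteq\mathcal{D}_\sigma^{-1}\big({\rm alg}_\rho(\mathscr{V})\big).$$
   Context: $\mathcal{H}$ finite-dimensional complex Hilbert space, $\mathfrak{B}(\mathcal{H})$ its linear operators. A $*$-algebra is a linear subspace of $\mathfrak{B}(\mathcal{H})$ closed under products and adjoints; ${\rm alg}(\mathcal{S})$ is the smallest $*$-algebra containing $\mathcal{S}$. ${\rm supp}(X)=(\ker X)^\perp$, ${\rm supp}(\mathcal{S})=\sum_{X\in\mathcal{S}}{\rm supp}(X)$. For positive definite $\rho$, $\mathcal{D}_\rho(X)=\rho^{1/2}X\rho^{1/2}$, $\mathcal{D}_\rho^{-1}(X)=\rho^{-1/2}X\rho^{-1/2}$. A $\rho$-distorted algebra is a linear subspace closed under adjoints and the product $X\cdot_\rho Y=X\rho^{-1}Y$; ${\rm alg}_\rho(\mathcal{S})$ is the smallest one containing $\mathcal{S}$. Wedderburn decomposition of a unital $*$-algebra $\mathscr{A}$: unitary $U$, $\mathcal{H}\cong\bigoplus_l\mathcal{H}_{S,l}\otimes\mathcal{H}_{F,l}$,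 $\mathscr{A}=U(\bigoplus_l\mathfrak{B}(\mathcal{H}_{S,l})\otimes I_{F,l})U^\dagger$. Compatibility: $\rho\sim\mathscr{A}$ if for some Wedderburn decomposition of $\mathscr{A}$, $\rho=U(\bigoplus_l\rho_{S,l}\otimes\tau_{F,l})U^\dagger$ with $\rho_{S,l}\in\mathfrak{B}(\mathcal{H}_{S,l})$, $\tau_{F,l}\in\mathfrak{B}(\mathcal{H}_{F,l})$. *)

(* Defs.v *)
(* The Hilbert space H is C^n with C = R[i], R a realType
   (so C is the field of complex numbers); operators are n x n matrices. *)
From HB Require Import structures.
From mathcomp Require Import all_boot all_order all_algebra.
From mathcomp Require Import reals.
From mathcomp.real_closed Require Import complex mxtens.

Set Implicit Arguments.
Unset Strict Implicit.
Unset Printing Implicit Defensive.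

Import Order.TTheory GRing.Theory Num.Theory.
Local Open Scope ring_scope.

Section Defs.
Variables (C : numClosedFieldType) (n : nat).
Local Notation M := 'M[C]_n.

Definition adj (p q : nat) (A : 'M[C]_(p, q)) : 'M[C]_(q, p) :=
  map_mx Num.conj A^T.

Definition opset := M -> Prop.

Definition subset_op (S T : opset) : Prop := forall X, S X -> T X.

Definition linear_subspace (V : opset) : Prop :=
  [/\ V 0, (forall X Y, V X -> V Y -> V (X + Y)) &
      (forall (a : C) X, V X -> V (a *: X))].

Definition star_algebra (A : opset) : Prop :=
  [/\ linear_subspace A, (forall X Y, A X -> A Y -> A (X *m Y)) &
      (forall X, A X -> A (adj X))].

Definition alg (S : opset) : opset :=
  fun X => forall A, star_algebra A -> subset_op S A -> A X.

Definition distorted_algebra (rho : M) (A : opset) : Prop :=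
  [/\ linear_subspace A, (forall X Y, A X -> A Y -> A (X *m invmx rho *m Y)) &
      (forall X, A X -> A (adj X))].

Definition alg_rho (rho : M) (S : opset) : opset :=
  fun X => forall A, distorted_algebra rho A -> subset_op S A -> A X.

Definition posdef (A : M) : Prop :=
  adj A = A /\ forall v : 'cV[C]_n, v != 0 -> 0 < (adj v *m A *m v) 0 0.

(* supp(X) = (ker X)^perp, as a predicate on vectors *)
Definition supp (X : M) : 'cV[C]_n -> Prop :=
  fun w => forall v : 'cV[C]_n, X *m v = 0 -> adj v *m w = 0.

(* supp(S) = H : every vector is a finite sum of vectors in supports of
   elements of S *)
Definition full_support (S : opset) : Prop :=
  forall w : 'cV[C]_n, exists s : seq (M * 'cV[C]_n),
    (forall p, p \in s -> S p.1 /\ supp p.1 p.2) /\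
    w = \sum_(p <- s) p.2.

(* D_r^{-1}(X) = r^{-1} X r^{-1}, where r = rho^{1/2} *)
Definition Dinv (r : M) (X : M) : M := invmx r *m X *m invmx r.

Definition Dinv_set (r : M) (S : opset) : opset :=
  fun Y => exists2 X, S X & Y = Dinv r X.

Definition unitary (U : M) : Prop := U *m adj U = 1%:M /\ adj U *m U = 1%:M.

(* rho ~ A : there is a Wedderburn decomposition of A,
     H = U ( (+)_l H_{S,l} (x) H_{F,l} ),  A = U ( (+)_l B(H_{S,l}) (x) I_{F,l} ) U^dag,
   in which rho = U ( (+)_l rho_{S,l} (x) tau_{F,l} ) U^dag. *)
Definition compatible (rho : M) (A : opset) : Prop :=
  exists (k : nat) (dS dF : 'I_k -> nat)
         (E : (\sum_(l < k) dS l * dF l)%N = n) (U : M),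
    [/\ unitary U,
        (forall X, A X <->
           exists B : forall l, 'M[C]_(dS l),
             X = U *m castmx (E, E)
                   (mxdiag (fun l => B l *t (1%:M : 'M[C]_(dF l)))) *m adj U) &
        exists (rS : forall l, 'M[C]_(dS l)) (tF : forall l, 'M[C]_(dF l)),
          rho = U *m castmx (E, E) (mxdiag (fun l => rS l *t tF l)) *m adj U].

End Defs.

(* Main.v *)
Require Import Defs.
From HB Require Import structures.
From mathcomp Require Import all_boot all_order all_algebra.
From mathcomp Require Import reals.
From mathcomp.real_closed Require Import complex mxtens.
Import Order.TTheory GRing.Theory Num.Theory.
Local Open Scope ring_scope.

Section S.
Variables (C : numClosedFieldType) (n : nat).
Implicit Types (A S : opset C n) (rho : 'M[C]_n).

Definition malg A := [/\ linear_subspace A & forall X Y, A X -> A Y -> A (X *m Y)].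

Lemma malg_inv A c : malg A -> A c -> c \in unitmx -> A (invmx c).
Proof.
case=> [[A0 AD AZ] AM] Ac cu.
case: n => [|m] in A A0 AD AZ AM c Ac cu *.
  by rewrite [invmx c]flatmx0.
have LX q : A (horner_mx c ('X * q)).
  elim/poly_ind: q => [|q a IH]; first by rewrite mulr0 rmorph0.
  rewrite mulrDr mulrA rmorphD rmorphM /= horner_mx_X -mulmxE.
  have -> : 'X * a%:P = a *: 'X :> {poly C} by rewrite mulrC mul_polyC.
  rewrite linearZ /= horner_mx_X.
  by apply: AD; [apply: AM | apply: AZ].
set p := char_poly c.
have Hp : p = (p`_0)%:P + drop_poly 1 p * 'X.
  rewrite -[LHS](poly_take_drop 1) expr1; congr (_ + _).
  by apply/polyP => i; rewrite !coefE; case: i.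
have p0 : p`_0 != 0.
  by rewrite /p char_poly_det mulf_eq0 negb_or signr_eq0 -unitfE -unitmxE.
have HC : horner_mx c ('X * drop_poly 1 p) = - (p`_0)%:M.
  have := Cayley_Hamilton c; rewrite -/p [in X in horner_mx _ X]Hp rmorphD /= horner_mx_C mulrC.
  by move/eqP; rewrite addr_eq0 => /eqP ->; rewrite opprK.
have A1 : A 1%:M.
  have -> : 1%:M = (- (p`_0)^-1) *: horner_mx c ('X * drop_poly 1 p) :> 'M_m.+1.
    by rewrite HC scaleNr scalerN opprK -[(p`_0)%:M]scalemx1 scalerA mulVf // scale1r.
  exact: AZ.
have L1 q : A (horner_mx c q).
  elim/poly_ind: q => [|q a IH]; first by rewrite rmorph0.
  rewrite rmorphD rmorphM /= horner_mx_X horner_mx_C -mulmxE -scalemx1.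
  by apply: AD; [apply: AM | apply: AZ].
have -> : invmx c = (- (p`_0)^-1) *: horner_mx c (drop_poly 1 p).
  move: HC; rewrite rmorphM /= horner_mx_X -mulmxE => HC.
  rewrite -[invmx c]mulmx1; set k := _ *: _.
  have <- : c *m k = 1%:M.
    by rewrite -scalemxAr HC scaleNr scalerN opprK -[(p`_0)%:M]scalemx1 scalerA mulVf // scale1r.
  by rewrite mulKmx.
exact: AZ.
Qed.

Lemma adjM (A B : 'M[C]_n) : adj (A *m B) = adj B *m adj A.
Proof. by rewrite /adj trmx_mul map_mxM. Qed.
Lemma adjV (A : 'M[C]_n) : adj (invmx A) = invmx (adj A).
Proof. by rewrite /adj trmx_inv map_invmx. Qed.

Lemma invmxM (A B : 'M[C]_n) : A \in unitmx -> B \in unitmx ->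
  invmx (A *m B) = invmx B *m invmx A.
Proof.
move=> Au Bu.
have E : (A *m B) *m (invmx B *m invmx A) = 1%:M.
  by rewrite mulmxA -(mulmxA A) mulmxV // mulmx1 mulmxV.
by rewrite -[invmx (A *m B)]mulmx1 -E mulmxA mulVmx ?unitmx_mul ?Au // mul1mx.
Qed.

Lemma posdef_unit (r : 'M[C]_n) : posdef r -> r \in unitmx.
Proof.
case=> _ Hr; rewrite unitmxE unitfE -det_tr; apply/negP => /det0P [u u0 ur].
have : 0 < (adj u^T *m r *m u^T) 0 0.
  by apply: Hr; rewrite -(inj_eq (@trmx_inj _ _ _)) trmxK trmx0.
rewrite -mulmxA.
have -> : r *m u^T = 0 by rewrite -[r]trmxK -trmx_mul ur trmx0.
by rewrite mulmx0 mxE ltxx.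
Qed.

Lemma alg_star S : star_algebra (alg S).
Proof.
split; [split|..].
- by move=> A [[]].
- by move=> X Y HX HY A HA HS; have [[_ D _] _ _] := HA; apply: D; [apply: HX|apply: HY].
- by move=> a X HX A HA HS; have [[_ _ Z] _ _] := HA; apply: Z; apply: HX.
- by move=> X Y HX HY A HA HS; have [_ M _] := HA; apply: M; [apply: HX|apply: HY].
- by move=> X HX A HA HS; have [_ _ J] := HA; apply: J; apply: HX.
Qed.

Lemma alg_sub S : subset_op S (alg S).
Proof. by move=> X HX A _ HS; apply: HS. Qed.

Lemma alg_rho_dist rho S : distorted_algebra rho (alg_rho rho S).
Proof.
split; [split|..].
- by move=> A [[]].
- by move=> X Y HX HY A HA HS; have [[_ D _] _ _] := HA; apply: D; [apply: HX|apply: HY].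
- by move=> a X HX A HA HS; have [[_ _ Z] _ _] := HA; apply: Z; apply: HX.
- by move=> X Y HX HY A HA HS; have [_ M _] := HA; apply: M; [apply: HX|apply: HY].
- by move=> X HX A HA HS; have [_ _ J] := HA; apply: J; apply: HX.
Qed.

Lemma alg_rho_sub rho S : subset_op S (alg_rho rho S).
Proof. by move=> X HX A _ HS; apply: HS. Qed.

Section Main.
Variables (V : opset C n) (rho sigma r s : 'M[C]_n).
Hypotheses (Vl : linear_subspace V) (ru : r \in unitmx) (ra : adj r = r)
  (rr : r *m r = rho) (su : s \in unitmx) (sa : adj s = s) (ss : s *m s = sigma)
  (Hc : alg (Dinv_set r V) (Dinv r sigma)).

Let AA := alg (Dinv_set r V).

Lemma rhoV : invmx rho = invmx r *m invmx r.
Proof. by rewrite -rr invmxM //. Qed.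
Lemma sigmaV : invmx sigma = invmx s *m invmx s.
Proof. by rewrite -ss invmxM //. Qed.

Lemma rDr X : r *m Dinv r X *m r = X.
Proof. by rewrite /Dinv !mulmxA mulmxV // mul1mx -mulmxA mulVmx // mulmx1. Qed.
Lemma Drr X : Dinv r (r *m X *m r) = X.
Proof. by rewrite /Dinv !mulmxA mulVmx // mul1mx -mulmxA mulmxV // mulmx1. Qed.

Lemma AA_rho Y : AA Y -> alg_rho rho V (r *m Y *m r).
Proof.
have [[R0 RD RZ] RM RJ] := alg_rho_dist rho V.
move=> HY; apply: (HY (fun Z => alg_rho rho V (r *m Z *m r))); [split; [split|..]|].
- by rewrite /= mulmx0 mul0mx.
- by move=> X Z HX HZ; rewrite /= mulmxDr mulmxDl; apply: RD.
- by move=> a X HX; rewrite /= -scalemxAr -scalemxAl; apply: RZ.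
- move=> X Z HX HZ; have := RM _ _ HX HZ; congr (alg_rho _ _ _).
  rewrite rhoV !mulmxA; congr (_ *m _).
  by rewrite -!mulmxA; congr (_ *m _); rewrite !mulmxA mulmxK // mulmxKV.
- by move=> X HX; have := RJ _ HX; rewrite !adjM ra mulmxA.
- by move=> Y' [X HX ->]; rewrite /= rDr; apply: alg_rho_sub.
Qed.

Lemma rho_AA X : alg_rho rho V X -> AA (Dinv r X).
Proof.
have [[A0 AD AZ] AM AJ] := alg_star (Dinv_set r V).
move=> HX; apply: (HX (fun Z => AA (Dinv r Z))); [split; [split|..]|].
- by rewrite /= /Dinv mulmx0 mul0mx.
- by move=> Y Z HY HZ; rewrite /= /Dinv mulmxDr mulmxDl; apply: AD.
- by move=> a Y HY; rewrite /= /Dinv -scalemxAr -scalemxAl; apply: AZ.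
- move=> Y Z HY HZ; have := AM _ _ HY HZ; congr (AA _).
  by rewrite /Dinv rhoV !mulmxA.
- by move=> Y HY; have := AJ _ HY; rewrite /Dinv !adjM adjV ra mulmxA.
- by move=> Y HY; apply: alg_sub; exists Y.
Qed.

Lemma key X Y : alg_rho rho V X -> alg_rho rho V Y ->
  alg_rho rho V (X *m invmx sigma *m Y).
Proof.
move=> HX HY.
have [[A0 AD AZ] AM AJ] := alg_star (Dinv_set r V).
have cu : Dinv r sigma \in unitmx.
  by rewrite /Dinv !unitmx_mul !unitmx_inv ru -ss unitmx_mul su.
have Hci : AA (invmx (Dinv r sigma)) by apply: malg_inv (conj (And3 A0 AD AZ) AM) Hc cu.
have := AA_rho _ (AM _ _ (AM _ _ (rho_AA _ HX) Hci) (rho_AA _ HY)).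
congr (alg_rho _ _ _).
have sigu : sigma \in unitmx by rewrite -ss unitmx_mul su.
have Ei : invmx (Dinv r sigma) = r *m invmx sigma *m r.
  rewrite /Dinv invmxM ?unitmx_mul ?unitmx_inv ?ru ?sigu //.
  by rewrite invmxM ?unitmx_inv ?ru ?sigu // !invmxK mulmxA.
rewrite Ei /Dinv !mulmxA mulmxV // mul1mx !(mulmxKV ru) !(mulmxK ru) -!mulmxA.
by [].
Qed.

Lemma final : subset_op (alg (Dinv_set s V)) (Dinv_set s (alg_rho rho V)).
Proof.
move=> X HX; exists (s *m X *m s); last first.
  by rewrite /Dinv !mulmxA mulVmx // mul1mx -mulmxA mulmxV // mulmx1.
have [[R0 RD RZ] RM RJ] := alg_rho_dist rho V.
apply: (HX (fun Z => alg_rho rho V (s *m Z *m s))); [split; [split|..]|].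
- by rewrite /= mulmx0 mul0mx.
- by move=> Y Z HY HZ; rewrite /= mulmxDr mulmxDl; apply: RD.
- by move=> a Y HY; rewrite /= -scalemxAr -scalemxAl; apply: RZ.
- move=> Y Z HY HZ; have := key _ _ HY HZ; congr (alg_rho _ _ _).
  rewrite sigmaV !mulmxA; congr (_ *m _).
  by rewrite -!mulmxA; congr (_ *m _); rewrite !mulmxA mulmxK // mulmxKV.
- by move=> Y HY; have := RJ _ HY; rewrite !adjM sa mulmxA.
- move=> Y' [Y HY ->]; rewrite /= /Dinv !mulmxA mulmxV // mul1mx.
  by rewrite -mulmxA mulVmx // mulmx1; apply: alg_rho_sub.
Qed.
End Main.
End S.


Theorem mainTheorem7 (R : realType) (n : nat) (V : opset R[i] n)
    (rho sigma r s : 'M[R[i]]_n) :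
  linear_subspace V ->
  full_support V ->
  posdef rho -> posdef r -> r *m r = rho ->
  posdef sigma -> posdef s -> s *m s = sigma ->
  compatible rho (alg (Dinv_set r V)) ->
  alg (Dinv_set r V) (Dinv r sigma) ->
  subset_op (alg (Dinv_set s V)) (Dinv_set s (alg_rho rho V)).
Proof.
move=> _ _ _ Hr rr _ Hs ss _ Hc.
have pr := posdef_unit _ _ _ Hr. have ps := posdef_unit _ _ _ Hs.
exact: (final _ _ V rho sigma r s pr Hr.1 rr ps Hs.1 ss Hc).
Qed.
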